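(* Let $n\ge2$, let $G=W(P_n)$, and let $q$ be an integer with $2\le q\le\lfloor n/2\rfloor+1$. If $N$ is a matching of $P_n$ with $|N|=q-1$, then \[ \operatorname{reg}\big(I(G^N)\big)\le 2+\Big\lfloor\frac{n-q}{2}\Big\rfloor. \]
   Context: $P_n$ is the path with vertices $x_1,\dots,x_n$ and edges $\{x_i,x_{i+1}\}$; $W(P_n)$ adds vertices $y_1,\dots,y_n$ and whiskers $\{x_i,y_i\}$. $I(H)$ denotes the edge ideal and $\operatorname{reg}$ the Castelnuovo–Mumford regularity. Even-connection: for a matching $N=\{e_1,\dots,e_p\}$ of a graph $G$ and $u,v\in V(G)$, $u\sim_N v$ if there are $r\ge1$ and vertices $p_0=u,p_1,\dots,p_{2r+1}=v$ with consecutive vertices adjacent in $G$, each $\{p_{2k+1},p_{2k+2}\}$ ($0\le k\le r-1$) an edge of $N$, and each edge of $N$ used at most once in this way. $G^N$ is the graph on $V(G)\setminus\operatorname{Supp}(N)$ where $u,v$ are adjacent iff $\{u,v\}\in E(G)$ or $u\sim_N v$. *)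

(* Defs.v *)
From HB Require Import structures.
From mathcomp Require Import all_boot all_order all_algebra.
From mathcomp Require Import boolp.
Set Implicit Arguments. Unset Strict Implicit. Unset Printing Implicit Defensive.
Import GRing.Theory.

(* Edges are represented as two-element sets {set V}.                       *)

Definition suppN (V : finType) (N : {set {set V}}) : {set V} :=
  \bigcup_(e in N) e.

Definition is_matching (V : finType) (E : V -> V -> Prop) (N : {set {set V}}) :=
  (forall e, e \in N -> exists u v, E u v /\ e = [set u; v]) /\
  (forall e f, e \in N -> f \in N -> e != f -> [disjoint e & f]).

Definition even_connected (V : finType) (E : V -> V -> Prop)
    (N : {set {set V}}) (u v : V) : Prop :=
  exists (r : nat) (p : nat -> V),
    [/\ (1 <= r)%N, p 0%N = u, p (2 * r + 1)%N = v &
        (forall i, (i < 2 * r + 1)%N -> E (p i) (p i.+1))] /\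
    [/\ (forall k, (k < r)%N -> [set p (2 * k + 1)%N; p (2 * k + 2)%N] \in N) &
        (forall k l, (k < r)%N -> (l < r)%N ->
           [set p (2 * k + 1)%N; p (2 * k + 2)%N] =
           [set p (2 * l + 1)%N; p (2 * l + 2)%N] -> k = l)].

Definition GN_vertex (V : finType) (N : {set {set V}}) : finType :=
  {x : V | x \notin suppN N}.

Definition GN_adj (V : finType) (E : V -> V -> Prop) (N : {set {set V}})
    (u v : GN_vertex N) : Prop :=
  val u <> val v /\ (E (val u) (val v) \/ even_connected E N (val u) (val v)).

(* The whisker graph W(P_n).  Vertex (i, false) is x_{i+1}, vertex          *)
(* (i, true) is y_{i+1}, for i : 'I_n.                                      *)
Definition WP_vertex (n : nat) : finType := ('I_n * bool)%type.

Definition path_adj (n : nat) (a b : WP_vertex n) : Prop :=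
  a.2 = false /\ b.2 = false /\ (a.1.+1 = b.1 \/ b.1.+1 = a.1)%N.

Definition WP_adj (n : nat) (a b : WP_vertex n) : Prop :=
  path_adj a b \/ (a.1 = b.1 /\ a.2 <> b.2).

(* For a graph H with vertex type V, I(H) = (x_u x_v : {u,v} in E(H)) in    *)
(* S = K[x_v : v in V].  We compute the N^V-graded Betti numbers            *)
(*   beta_{i,a}(I) = dim_K Tor_i^S(I, K)_a = dim_K Tor_{i+1}^S(S/I, K)_a     *)
(* via the Koszul complex K(x; S/I), which resolves K and whose multidegree *)
(* a component has as K-basis the e_F (x) x^(a - 1_F) with |F| = i,         *)
(* F subset supp(a) and x^(a-1_F) a standard monomial (not in I).           *)
Section EdgeIdealBetti.
Variables (K : fieldType) (V : finType) (E : V -> V -> Prop).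

(* the monomial x^b lies in the monomial ideal I(H) *)
Definition mono_in_edge_ideal (b : V -> nat) : bool :=
  `[< exists u v, E u v /\ (0 < b u)%N /\ (0 < b v)%N >].

Definition msupp (a : {ffun V -> nat}) : {set V} := [set v | (0 < a v)%N].

Definition koszul_basis (i : nat) (a : {ffun V -> nat}) : {set {set V}} :=
  [set F : {set V} | [&& #|F| == i, F \subset msupp a &
                         ~~ mono_in_edge_ideal (fun v => a v - (v \in F))]].

(* sign (-1)^{#{g in F : g < f}} where F \ G = {f} *)
Definition ksign (F G : {set V}) : K :=
  (-1)%R ^+ #|[set p : V * V | [&& p.1 \in F, p.2 \in F :\: G &
                                (enum_rank p.1 < enum_rank p.2)%N]]|.

(* matrix (row-vector convention) of the Koszul differential
   K_{i+1}(x; S/I)_a -> K_i(x; S/I)_a *)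
Definition koszul_diff (i : nat) (a : {ffun V -> nat}) :
    'M[K]_(#|koszul_basis i.+1 a|, #|koszul_basis i a|) :=
  \matrix_(r, c)
    (let F : {set V} := enum_val (A := koszul_basis i.+1 a) r in
     let G : {set V} := enum_val (A := koszul_basis i a) c in
     if (G \subset F) && (#|F :\: G| == 1%N) then ksign F G else 0%R).

(* dim_K H_i(K(x; S/I))_a = dim_K Tor_i^S(S/I, K)_a *)
Definition koszul_hdim (i : nat) (a : {ffun V -> nat}) : nat :=
  (#|koszul_basis i a| - (if i is i'.+1 then \rank (koszul_diff i' a) else 0)
     - \rank (koszul_diff i a))%N.

Definition edge_ideal_mbetti (i : nat) (a : {ffun V -> nat}) : nat :=
  koszul_hdim i.+1 a.

(* reg(I(H)) <= B, i.e. beta_{i,j}(I(H)) != 0 implies j - i <= B, where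
   beta_{i,j} = sum_{|a| = j} beta_{i,a}. *)
Definition edge_ideal_reg_le (B : nat) : Prop :=
  forall (i : nat) (a : {ffun V -> nat}),
    edge_ideal_mbetti i a != 0%N -> (\sum_(v : V) a v <= i + B)%N.

End EdgeIdealBetti.

(* Main.v *)
Require Import Defs.
From HB Require Import structures.
From mathcomp Require Import all_boot all_order all_algebra.
From mathcomp Require Import boolp zify.
Set Implicit Arguments. Unset Strict Implicit. Unset Printing Implicit Defensive.
Import GRing.Theory.
Local Open Scope ring_scope.

Section Alg.
Variables (K : fieldType) (V : finType).

Definition cf (F G : {set V}) : K :=
  if (G \subset F) && (#|F :\: G| == 1%N) then ksign K F G else 0%R.

Definition Mat (R C : {set {set V}}) : 'M[K]_(#|R|, #|C|) :=
  \matrix_(r, c) cf (enum_val (A := R) r) (enum_val (A := C) c).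

Definition rk (R C : {set {set V}}) : nat := \rank (Mat R C).

Definition Sel (R' R : {set {set V}}) : 'M[K]_(#|R'|, #|R|) :=
  \matrix_(j, i) ((enum_val (A := R') j == enum_val (A := R) i)%:R).

Lemma sum_pick (C : {set {set V}}) (F : {set V}) (h : {set V} -> K) :
  F \in C ->
  (\sum_(k < #|C|) ((F == enum_val (A := C) k)%:R * h (enum_val (A := C) k)) = h F)%R.
Proof.
move=> HF.
rewrite (bigD1 (enum_rank_in HF F)) //= enum_rankK_in // eqxx mul1r big1 ?addr0 //.
move=> k Hk; case: eqP => [E|]; last by rewrite mul0r.
by case/eqP: Hk; move: HF; rewrite E => HF; rewrite enum_valK_in.
Qed.

Lemma sum_pick' (C : {set {set V}}) (F : {set V}) (h : {set V} -> K) :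
  F \in C ->
  (\sum_(k < #|C|) (h (enum_val (A := C) k) * (enum_val (A := C) k == F)%:R) = h F)%R.
Proof.
move=> HF; rewrite -(sum_pick h HF); apply: eq_bigr => k _.
by rewrite mulrC eq_sym.
Qed.

Lemma mat_sel (R R' C C' : {set {set V}}) :
  R' \subset R -> C' \subset C ->
  Mat R' C' = (Sel R' R *m Mat R C *m (Sel C' C)^T)%R.
Proof.
move=> sR sC; apply/matrixP => j j'; rewrite !mxE.
have HR : enum_val (A := R') j \in R by apply: (subsetP sR); apply: enum_valP.
have HC : enum_val (A := C') j' \in C by apply: (subsetP sC); apply: enum_valP.
rewrite (eq_bigr (fun k => ((enum_val (A:=C') j' == enum_val (A:=C) k)%:R *
     cf (enum_val (A := R') j) (enum_val (A:=C) k))%R)); last first.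
  move=> k _; rewrite !mxE mulrC; congr (_ * _)%R.
  rewrite (eq_bigr (fun i => ((enum_val (A:=R') j == enum_val (A:=R) i)%:R *
     cf (enum_val (A:=R) i) (enum_val (A:=C) k))%R)).
    exact: (sum_pick (fun F => cf F (enum_val (A:=C) k)) HR).
  by move=> i _; rewrite !mxE.
by rewrite (sum_pick (fun G => cf (enum_val (A := R') j) G)) ?HC.
Qed.

Lemma rk_sub (R R' C C' : {set {set V}}) :
  R' \subset R -> C' \subset C -> (rk R' C' <= rk R C)%N.
Proof.
move=> sR sC; rewrite /rk (mat_sel sR sC).
apply: leq_trans (mxrankM_maxl _ _) _; exact: mxrankM_maxr.
Qed.

Lemma rk_block (R1 R2 C1 C2 : {set {set V}}) :
  [disjoint C1 & C2] ->
  (forall F G, F \in R1 -> G \in C2 -> cf F G = 0%R) ->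
  (rk R1 C1 + rk R2 C2 <= rk (R1 :|: R2) (C1 :|: C2))%N.
Proof.
move=> dC z.
set R := R1 :|: R2; set C := C1 :|: C2.
have sR1 : R1 \subset R by apply: subsetUl.
have sR2 : R2 \subset R by apply: subsetUr.
have sC1 : C1 \subset C by apply: subsetUl.
have sC2 : C2 \subset C by apply: subsetUr.
set M := Mat R C.
set P := (Sel C2 C)^T.
rewrite /rk -(mxrank_mul_ker M P) [X in (_ <= X)%N]addnC.
apply: leq_add.
  set W := (Sel R1 R *m M)%R.
  have -> : Mat R1 C1 = (W *m (Sel C1 C)^T)%R by rewrite (mat_sel sR1 sC1).
  apply: leq_trans (mxrankM_maxl _ _) _.
  apply: mxrankS; rewrite sub_capmx submxMl /=.
  apply/sub_kermxP.
  rewrite -(mat_sel sR1 sC2).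
  apply/matrixP => i j; rewrite !mxE; apply: z; exact: enum_valP.
rewrite (mat_sel sR2 sC2) -mulmxA.
exact: mxrankM_maxr.
Qed.

Lemma rk_rows (R C R' : {set {set V}}) (g : {set V} -> {set V}) :
  R' \subset R -> (forall F, F \in R' -> g F \in C) ->
  (forall F, F \in R' -> cf F (g F) != 0%R) ->
  (forall F F', F \in R' -> F' \in R' -> F != F' -> cf F' (g F) = 0%R) ->
  (#|R'| <= rk R C)%N.
Proof.
move=> sR gC nz z.
apply: leq_trans (rk_sub sR (subxx C)).
pose Y : 'M[K]_(#|C|, #|R'|) := \matrix_(k, j)
   ((enum_val (A:=C) k == g (enum_val (A:=R') j))%:R *
     (cf (enum_val (A:=R') j) (g (enum_val (A:=R') j)))^-1)%R.
have -> : #|R'| = \rank (Mat R' C *m Y)%R.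
  suff -> : (Mat R' C *m Y)%R = 1%:M%R by rewrite mxrank1.
  apply/matrixP => j j'; rewrite !mxE.
  have Hg : g (enum_val (A:=R') j') \in C by apply: gC; apply: enum_valP.
  rewrite (eq_bigr (fun k => (cf (enum_val (A:=R') j) (enum_val (A:=C) k) *
        ((enum_val (A:=C) k == g (enum_val (A:=R') j'))%:R) *
        (cf (enum_val (A:=R') j') (g (enum_val (A:=R') j')))^-1)%R)); last first.
    by move=> k _; rewrite !mxE mulrA.
  rewrite -big_distrl /= (sum_pick' (fun G => cf (enum_val (A:=R') j) G) Hg).
  case: (eqVneq j j') => [<-|ne].
    by rewrite divff //; apply: nz; apply: enum_valP.
  rewrite z ?mul0r ?enum_valP //.
  by apply: contra ne => /eqP /enum_val_inj ->.
exact: mxrankM_maxl.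
Qed.

Definition hd (X : nat -> {set {set V}}) (m : nat) : nat :=
  (#|X m| - (if m is m'.+1 then rk (X m) (X m') else 0) - rk (X m.+1) (X m))%N.

End Alg.

Section Cone.
Variables (K : fieldType) (V : finType).

Lemma ksign_neq0 (F G : {set V}) : ksign K F G != 0.
Proof. by rewrite /ksign expf_neq0 // oppr_eq0 oner_eq0. Qed.

Lemma cf_neq0 (F G : {set V}) : G \subset F -> #|F :\: G| = 1%N -> cf K F G != 0.
Proof. by move=> s c; rewrite /cf s c eqxx /= ksign_neq0. Qed.

Lemma cf_eq0 (F G : {set V}) : ~~ (G \subset F) -> cf K F G = 0.
Proof. by move=> s; rewrite /cf (negbTE s). Qed.

Lemma setD_D1 (F : {set V}) t : t \in F -> F :\: (F :\ t) = [set t].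
Proof.
move=> tF; apply/setP => x; rewrite !inE.
by case: (eqVneq x t) => [->|]; rewrite ?tF //=; case: (x \in F).
Qed.

Lemma cone (X : nat -> {set {set V}}) (t : V) :
  (forall m (F : {set V}), F \in X m -> #|F| = m) ->
  (forall m (F : {set V}), t \notin F -> (F \in X m) = (t |: F \in X m.+1)) ->
  forall m, hd K X m = 0%N.
Proof.
move=> H1 H2.
pose T m := [set F : {set V} | (F \in X m) && (t \in F)].
pose S m := [set F : {set V} | (F \in X m) && (t \notin F)].
have rkT : forall m, (#|T m.+1| <= rk K (X m.+1) (X m))%N.
  move=> m; apply: (@rk_rows _ _ _ _ _ (fun F => F :\ t)).
  - by apply/subsetP => F; rewrite inE => /andP[].
  - move=> F; rewrite inE => /andP[FX tF].
    by rewrite H2 ?setD11 // setD1K.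
  - move=> F; rewrite inE => /andP[FX tF].
    by apply: cf_neq0; [apply: subsetDl | rewrite setD_D1 // cards1].
  - move=> F F'; rewrite !inE => /andP[FX tF] /andP[F'X tF'] ne.
    rewrite /cf; case: ifP => // /andP[sub /eqP c1].
    case/eqP: ne; apply/setP => x.
    case: (eqVneq x t) => [->|xt]; first by rewrite tF tF'.
    apply/idP/idP => [xF|xF'].
      by apply: (subsetP sub); rewrite !inE xt xF.
    case: (boolP (x \in F)) => // xF.
    have : (#|[set x; t]| <= #|F' :\: (F :\ t)|)%N.
      apply: subset_leq_card; apply/subsetP => y; rewrite !inE.
      case/orP => /eqP ->; first by rewrite (negbTE xF) xF' andbF.
      by rewrite eqxx tF'.
    by rewrite cards2 xt c1.
have TS : forall m, #|T m.+1| = #|S m|.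
  move=> m; have -> : T m.+1 = (fun F => t |: F) @: S m.
    apply/setP => F; rewrite inE; apply/andP/imsetP.
      move=> [FX tF]; exists (F :\ t); last by rewrite setD1K.
      by rewrite inE H2 ?setD11 // setD1K // FX.
    move=> [G]; rewrite inE => /andP[GX tG] ->.
    by rewrite -H2 // GX setU11.
  apply: card_in_imset => F G; rewrite !inE => /andP[_ tF] /andP[_ tG] e.
  by rewrite -(setU1K tF) -(setU1K tG) e.
move=> m; rewrite /hd.
have cX : #|X m| = (#|S m| + #|T m|)%N.
  rewrite addnC -(cardsID [set F : {set V} | t \in F] (X m)).
  by congr (_ + _)%N; apply: eq_card => F; rewrite !inE; case: (F \in X m); case: (t \in F).
have h2 := rkT m; rewrite TS in h2.
move: cX h2; case: m => [|m] cX h2.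
  have T0 : T 0%N = set0.
    by apply/setP => F; rewrite !inE; apply/negbTE; apply/nandP; case: (boolP (F \in X 0%N)) => FX; [right; move: (H1 _ _ FX) => /cards0_eq -> ; rewrite inE|left].
  rewrite T0 cards0 addn0 in cX; lia.
have h1 := rkT m; lia.
Qed.

End Cone.

Section Split.
Variables (K : fieldType) (V : finType) (E : V -> V -> Prop).

Definition Eb (u w : V) : bool := `[< E u w >].
Definition indep (S : {set V}) : bool := [forall u in S, forall w in S, ~~ Eb u w].

Lemma indepP (S : {set V}) : reflect (forall u w, u \in S -> w \in S -> ~~ Eb u w) (indep S).
Proof.
apply: (iffP forallP) => [h u w uS wS|h u].
  by move: (h u); rewrite uS /= => /forallP /(_ w); rewrite wS.
by apply/implyP => uS; apply/forallP => w; apply/implyP => wS; apply: h.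
Qed.

Definition Xs (s Z : {set V}) (m : nat) : {set {set V}} :=
  [set F : {set V} | [&& Z \subset F, F \subset s :|: Z, #|F| == m & indep (s :\: F)]].

Definition gh (s Z : {set V}) (m : nat) : nat := hd K (Xs s Z) m.

Definition ok (s : {set V}) (b : nat) : Prop :=
  forall (Z : {set V}) (m : nat), [disjoint s & Z] -> gh s Z m != 0%N -> (#|s| + #|Z| <= m + b)%N.

Definition isolated (s : {set V}) (t : V) : Prop :=
  forall w, w \in s -> ~~ Eb t w && ~~ Eb w t.

Lemma ok_mono (s : {set V}) (b b' : nat) : ok s b -> (b <= b')%N -> ok s b'.
Proof. move=> h le Z m d nz; have := h Z m d nz; lia. Qed.

Lemma indepU1 (S : {set V}) (t : V) : ~~ Eb t t ->
  (forall w, w \in S -> ~~ Eb t w && ~~ Eb w t) -> indep (t |: S) = indep S.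
Proof.
move=> tt h; apply/indepP/indepP => H u w uS wS.
  by apply: H; rewrite inE ?uS ?wS orbT.
move: uS wS; rewrite !inE => /orP[/eqP ->|uS] /orP[/eqP ->|wS] //.
- by case/andP: (h w wS).
- by case/andP: (h u uS).
- exact: H.
Qed.

Lemma ok_iso (s : {set V}) (b : nat) (t : V) : t \in s -> isolated s t -> ok s b.
Proof.
move=> ts iso Z m d; rewrite /gh (@cone _ _ _ t) ?eqxx //.
  by move=> k F; rewrite inE => /and4P[_ _ /eqP -> _].
move=> k F tF; rewrite !inE.
have tZ : t \notin Z by rewrite (disjointFr d ts).
rewrite cardsU1 tF add1n eqSS.
have -> : (Z \subset t |: F) = (Z \subset F).
  apply/idP/idP => h; apply/subsetP => x xZ; move: (subsetP h x xZ); rewrite ?inE //.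
    by case/orP => // /eqP ext; rewrite -ext xZ in tZ.
  by move=> ->; rewrite orbT.
have -> : (t |: F \subset s :|: Z) = (F \subset s :|: Z).
  by rewrite subUset sub1set inE ts.
have -> : s :\: F = t |: (s :\: (t |: F)).
  apply/setP => x; rewrite !inE; case: (eqVneq x t) => [->|]; by rewrite ?ts ?tF.
rewrite indepU1 //.
  by case/andP: (iso t ts).
by move=> w; rewrite !inE => /andP[_ ws]; apply: iso.
Qed.


Lemma disjP' (A B : {set V}) : (forall x, x \in A -> x \in B -> False) -> [disjoint A & B].
Proof.
move=> h; rewrite -setI_eq0; apply/eqP/setP => x; rewrite !inE.
by apply/negP => /andP[a b]; exact: h x a b.
Qed.

Definition Nb (s : {set V}) (v : V) : {set V} := [set w in s | Eb v w || Eb w v].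

Lemma Nb_sub (s : {set V}) v : Nb s v \subset s.
Proof. by apply/subsetP => w; rewrite inE => /andP[]. Qed.

Lemma Xs_A (s Z : {set V}) v m F : F \in Xs (s :\ v) (v |: Z) m -> v \in F.
Proof. by rewrite inE => /and4P[/subsetP h _ _ _]; apply: h; rewrite setU11. Qed.

Lemma Xs_B (s Z : {set V}) v m F : v \notin Z -> ~~ Eb v v ->
  F \in Xs (s :\: (v |: Nb s v)) (Z :|: Nb s v) m -> v \notin F.
Proof.
move=> vZ vv; rewrite inE => /and4P[_ /subsetP h _ _].
apply/negP => /h; rewrite !inE eqxx (negbTE vZ) (negbTE vv) /=.
by case: (v \in s).
Qed.

Lemma Xs_split (s Z : {set V}) v m : v \in s -> v \notin Z -> ~~ Eb v v ->
  Xs s Z m = Xs (s :\: (v |: Nb s v)) (Z :|: Nb s v) m :|: Xs (s :\ v) (v |: Z) m.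
Proof.
move=> vs vZ vv; apply/setP => F; rewrite in_setU.
case: (boolP (v \in F)) => vF.
  have -> : (F \in Xs (s :\: (v |: Nb s v)) (Z :|: Nb s v) m) = false.
    by apply/negP => /(Xs_B vZ vv); rewrite vF.
  rewrite /= !inE subUset sub1set vF /=.
  have -> : (s :\ v) :|: (v |: Z) = s :|: Z.
    by apply/setP => x; rewrite !inE; case: (eqVneq x v) => [->|]; rewrite ?vs ?orbT.
  have -> : (s :\ v) :\: F = s :\: F.
    by apply/setP => x; rewrite !inE; case: (eqVneq x v) => [->|]; rewrite ?vF ?andbF.
  done.
have -> : (F \in Xs (s :\ v) (v |: Z) m) = false.
  by apply/negP => /Xs_A; rewrite (negbTE vF).
rewrite orbF !inE.
apply/and4P/and4P => [[ZF Fs cF ind]|[ZF Fs cF ind]]; split => //.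
- rewrite subUset ZF /=; apply/subsetP => w; rewrite inE => /andP[ws ew].
  apply/negPn/negP => wF.
  have := (indepP _ ind v w); rewrite !inE vF ws wF vs => /(_ isT isT).
  case/orP: ew => [->//|ew] _.
  have := (indepP _ ind w v); rewrite !inE vF ws wF vs => /(_ isT isT).
  by rewrite ew.
- apply/subsetP => x xF; move: (subsetP Fs x xF); rewrite !inE.
  case/orP => [xs|->]; last by rewrite !orbT.
  rewrite xs /=; case: (eqVneq x v) => [exv|_]; first by move: xF; rewrite exv (negbTE vF).
  by case: (Eb v x); case: (Eb x v); rewrite ?orbT.
- apply/indepP => u w; rewrite !in_setD => /andP[uF /andP[_ us]] /andP[wF /andP[_ ws]].
  by apply: (indepP _ ind); rewrite in_setD ?uF ?wF ?us ?ws.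
- move: ZF; rewrite subUset => /andP[-> _] //.
- apply: (subset_trans Fs); apply/subsetP => x.
  rewrite !in_setU in_setD => /orP[/andP[_ ->]//|/orP[->|xN]]; rewrite ?orbT //.
  by rewrite (subsetP (Nb_sub s v) x xN).
move: ZF; rewrite subUset => /andP[_ /subsetP NF].
apply/indepP => u w; rewrite !inE => /andP[uF us] /andP[wF ws].
have nN : forall x, x \in s -> x \notin F -> ~~ (Eb v x || Eb x v).
  move=> x xs xF; apply/negP => e; move: (NF x); rewrite !inE xs e => /(_ isT).
  by rewrite (negbTE xF).
case: (eqVneq u v) => [->|uv].
  case: (eqVneq w v) => [->//|wv].
  by have := nN w ws wF; case: (Eb v w).
case: (eqVneq w v) => [->|wv].
  by have := nN u us uF; case: (Eb u v); rewrite ?orbT.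
apply: (indepP _ ind); rewrite !inE ?uF ?wF ?us ?ws ?uv ?wv /=.
  by rewrite (negbTE uv) andbT; apply: nN.
by rewrite (negbTE wv) andbT; apply: nN.
Qed.

Lemma hd_split (X A B : nat -> {set {set V}}) (v : V) :
  (forall m, X m = B m :|: A m) -> (forall m F, F \in A m -> v \in F) ->
  (forall m F, F \in B m -> v \notin F) ->
  forall m, (hd K X m <= hd K A m + hd K B m)%N.
Proof.
move=> XBA vA vB.
have dBA : forall m, [disjoint B m & A m].
  move=> m; rewrite -setI_eq0; apply/eqP/setP => F; rewrite !inE.
  by apply/negP => /andP[/vB /negbTE h /vA]; rewrite h.
have rkb : forall m, (rk K (B m.+1) (B m) + rk K (A m.+1) (A m) <= rk K (X m.+1) (X m))%N.
  move=> m; rewrite !XBA; apply: rk_block => // F G FB GA.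
  apply: cf_eq0; apply/negP => /subsetP /(_ v (vA _ _ GA)).
  by rewrite (negbTE (vB _ _ FB)).
have cb : forall m, #|X m| = (#|B m| + #|A m|)%N.
  by move=> m; rewrite XBA cardsU (disjoint_setI0 (dBA m)) cards0 subn0.
move=> m; rewrite /hd; have h2 := rkb m; have c := cb m.
case: m h2 c => [|m] h2 c; first lia.
have h1 := rkb m; lia.
Qed.

Lemma ok_split (s : {set V}) (v : V) (b b' : nat) : v \in s -> ~~ Eb v v ->
  ok (s :\ v) b -> ok (s :\: (v |: Nb s v)) b' -> (b'.+1 <= b)%N -> ok s b.
Proof.
move=> vs vv okA okB lb Z m d nz.
have vZ : v \notin Z by rewrite (disjointFr d vs).
have hs := @hd_split (Xs s Z) (Xs (s :\ v) (v |: Z))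
   (Xs (s :\: (v |: Nb s v)) (Z :|: Nb s v)) v
   (fun m => Xs_split m vs vZ vv) (fun m F => @Xs_A s Z v m F)
   (fun m F => @Xs_B s Z v m F vZ vv) m.
have NbZ : [disjoint Nb s v & Z].
  apply: disjP' => x xN xZ; move: (subsetP (Nb_sub s v) x xN) => xs.
  by rewrite (disjointFr d xs) in xZ.
have vN : v \notin Nb s v by rewrite inE (negbTE vv) vs.
case: (eqVneq (gh (s :\ v) (v |: Z) m) 0%N) => [hA|hA].
  have hB : gh (s :\: (v |: Nb s v)) (Z :|: Nb s v) m != 0%N.
    by apply: contra nz; rewrite /gh in hA *; move: hs; rewrite hA => h /eqP hB; lia.
  have dB : [disjoint s :\: (v |: Nb s v) & Z :|: Nb s v].
    apply: disjP' => x; rewrite !inE => /andP[/norP[_ xN] xs] /orP[xZ|xN'].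
      by rewrite (disjointFr d xs) in xZ.
    by rewrite xN' in xN.
  have := okB _ _ dB hB.
  rewrite cardsDS; last by rewrite subUset sub1set vs Nb_sub.
  rewrite (cardsU Z) setIC (disjoint_setI0 NbZ) cards0 subn0 cardsU1 vN.
  have := subset_leq_card (Nb_sub s v).
  have : (#|v |: Nb s v| <= #|s|)%N by apply: subset_leq_card; rewrite subUset sub1set vs Nb_sub.
  rewrite cardsU1 vN; lia.
have dA : [disjoint s :\ v & v |: Z].
  apply: disjP' => x; rewrite !inE => /andP[xv xs] /orP[/eqP xv'|xZ].
    by rewrite xv' eqxx in xv.
  by rewrite (disjointFr d xs) in xZ.
have := okA _ _ dA hA.
rewrite (cardsD1 v s) vs cardsU1 vZ; lia.
Qed.

Lemma ok_empty (b : nat) : ok set0 b.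
Proof.
move=> Z m d nz; rewrite cards0 add0n.
have : #|Xs set0 Z m| != 0%N.
  by apply: contra nz; rewrite /gh /hd => /eqP ->.
rewrite -lt0n => /card_gt0P [F].
rewrite inE => /and4P[ZF _ /eqP cF _].
have := subset_leq_card ZF; lia.
Qed.

End Split.

Section Bridge.
Variables (K : fieldType) (V : finType) (E : V -> V -> Prop).

Lemma rank_kd i a : \rank (koszul_diff K E i a) = rk K (koszul_basis E i.+1 a) (koszul_basis E i a).
Proof. by rewrite /rk; congr (mxrank _); apply/matrixP => r c; rewrite !mxE. Qed.

Lemma hdim_eq i a : koszul_hdim K E i a = hd K (fun m => koszul_basis E m a) i.
Proof. by rewrite /koszul_hdim /hd; case: i => [|i]; rewrite !rank_kd. Qed.

Lemma mono_ext (b1 b2 : V -> nat) : (forall x, (0 < b1 x)%N = (0 < b2 x)%N) ->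
  mono_in_edge_ideal E b1 = mono_in_edge_ideal E b2.
Proof.
move=> h; rewrite /mono_in_edge_ideal.
apply/asboolP/asboolP => -[u [w [e [p1 p2]]]]; exists u, w; split => //;
  by rewrite ?h // -?h.
Qed.

Lemma hdim_nonsq i (a : {ffun V -> nat}) (t : V) : (2 <= a t)%N -> koszul_hdim K E i a = 0%N.
Proof.
move=> at2; rewrite hdim_eq; apply: (@cone _ _ _ t).
  by move=> m F; rewrite inE => /and3P[/eqP -> _ _].
move=> m F tF; rewrite !inE cardsU1 tF add1n eqSS.
have tS : t \in msupp a by rewrite inE; lia.
rewrite subUset sub1set tS /=.
congr [&& _, _ & _]; congr negb; apply: mono_ext => x.
rewrite !inE; case: (eqVneq x t) => [->|]; rewrite ?(negbTE tF) /=; lia.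
Qed.

Lemma basis_sq m (a : {ffun V -> nat}) : (forall v, a v <= 1)%N ->
  koszul_basis E m a = Xs E (msupp a) set0 m.
Proof.
move=> sq; apply/setP => F; rewrite !inE sub0set setU0 /=.
case: (boolP (F \subset msupp a)) => FS; rewrite /= ?andbF //.
congr andb; apply/idP/idP.
  move=> nm; apply/indepP => u w; rewrite !inE => /andP[uF ua] /andP[wF wa].
  apply/negP => euw; case/negP: nm; apply/asboolP; exists u, w; split.
    exact/asboolP.
  by rewrite (negbTE uF) (negbTE wF) !subn0.
move/indepP => ind; apply/negP => /asboolP [u [w [e [pu pw]]]].
have h : forall x, (0 < a x - (x \in F))%N -> x \in msupp a :\: F.
  move=> x; rewrite !inE; have := sq x; case: (x \in F) => /=; lia.
have := ind u w (h u pu) (h w pw); rewrite /Eb => /negP; apply; exact/asboolP.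
Qed.

Lemma sum_sq (a : {ffun V -> nat}) : (forall v, a v <= 1)%N ->
  (\sum_(v : V) a v)%N = #|msupp a|.
Proof.
move=> sq; rewrite -sum1_card [in RHS]big_mkcond /=; apply: eq_bigr => v _.
by rewrite inE; have := sq v; case: (a v) => [|[]].
Qed.

Lemma reg_from_ok (b : nat) : (forall s : {set V}, ok K E s b) ->
  edge_ideal_reg_le K E b.+1.
Proof.
move=> hok i a nz.
case: (boolP [exists t, (2 <= a t)%N]) => [/existsP [t at2]|].
  by rewrite /edge_ideal_mbetti (hdim_nonsq _ at2) in nz.
rewrite negb_exists => /forallP sq'.
have sq : forall v, (a v <= 1)%N by move=> v; have := sq' v; lia.
have := hok (msupp a) set0 i.+1.
have -> : gh K E (msupp a) set0 i.+1 = edge_ideal_mbetti K E i a.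
  rewrite /edge_ideal_mbetti hdim_eq /gh; congr hd; apply: funext => m.
  by rewrite basis_sq.
rewrite sum_sq // cards0 addn0 => h; have d0 : [disjoint msupp a & (set0 : {set V})] by apply: disjP' => x _; rewrite inE.
have := h d0 nz; lia.
Qed.

End Bridge.

Local Close Scope ring_scope.
Local Open Scope nat_scope.

Section Graph.
Variables (n : nat) (N : {set {set WP_vertex n}}).
Hypothesis HM : is_matching (@path_adj n) N.

Local Notation W := (WP_vertex n).

Definition pos (w : W) : nat := nat_of_ord w.1.

Definition lend (j : nat) : bool :=
  [exists u : W, [exists w : W, [&& (pos u == j ), (pos w == j.+1 ),
     ~~ u.2, ~~ w.2 & [set u; w] \in N]]].

Definition runs (j t : nat) : Prop := forall i, (i < t)%N -> lend (j + 2 * i).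

Definition nbx (u : W) (p : nat) : bool :=
  (u.2 && (pos u == p )) || (~~ u.2 && (((pos u).+1 == p) || (p.+1 == pos u))).

Lemma xeq (a b : W) : pos a = pos b  -> a.2 = b.2 -> a = b.
Proof. by case: a b => [a1 a2] [b1 b2]; rewrite /pos /= => /val_inj -> ->. Qed.

Lemma share (e1 e2 : {set W}) x : e1 \in N -> e2 \in N -> x \in e1 -> x \in e2 -> e1 = e2.
Proof.
move=> h1 h2 x1 x2; case: (eqVneq e1 e2) => // ne.
by have := HM.2 _ _ h1 h2 ne; move/disjointFr => /(_ x x1); rewrite x2.
Qed.

Lemma edge2 (a b : W) : [set a; b] \in N ->
  [/\ a.2 = false, b.2 = false & ((pos a).+1 = pos b  \/ (pos b).+1 = pos a )].
Proof.
move=> /(HM.1) [u [w [[u2 [w2 uw0]] e]]].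
have uw : (pos u).+1 = pos w \/ (pos w).+1 = pos u := uw0.
clear uw0.
have au : (a == u) || (a == w) by rewrite -in_set2 -e set21.
have bu : (b == u) || (b == w) by rewrite -in_set2 -e set22.
have uw' : u != w.
  by apply/eqP => euw; move: uw; rewrite euw; lia.
have ab : a != b.
  apply/eqP => eab; move: e; rewrite eab setUid => e.
  have : u \in [set b] by rewrite e set21.
  have : w \in [set b] by rewrite e set22.
  by rewrite !inE => /eqP e1 /eqP e2; rewrite e1 e2 eqxx in uw'.
have [ea|ea] : a = u \/ a = w by case/orP: au => /eqP; [left|right].
  have [eb|eb] : b = u \/ b = w by case/orP: bu => /eqP; [left|right].
    by rewrite ea eb eqxx in ab.
  by rewrite ea eb; split => //; lia.
have [eb|eb] : b = u \/ b = w by case/orP: bu => /eqP; [left|right].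
  by rewrite ea eb; split => //; lia.
by rewrite ea eb eqxx in ab.
Qed.

Lemma WP_adj_sym (a b : W) : WP_adj a b -> WP_adj b a.
Proof.
rewrite /WP_adj /path_adj => -[[a2 [b2 h]]|[h1 h2]].
  by left; split => //; split => //; case: h; [right|left].
by right; split => // e; apply: h2.
Qed.

Lemma xx_adj (a b : W) : a.2 = false -> b.2 = false -> WP_adj a b ->
  ((pos a).+1 = pos b  \/ (pos b).+1 = pos a ).
Proof. by move=> a2 b2 [[_ [_ h]]|[_ h]] //; rewrite a2 b2 in h. Qed.

Lemma step (a b a' b' : W) : [set a; b] \in N -> [set a'; b'] \in N ->
  [set a; b] <> [set a'; b'] -> WP_adj b a' ->
  (pos b = pos a + 1  -> pos a' = pos b + 1  /\ pos b' = pos a' + 1 ) /\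
  (pos a = pos b + 1  -> pos b = pos a' + 1  /\ pos a' = pos b' + 1 ).
Proof.
move=> e1 e2 ne adj.
case: (edge2 e1) => a2 b2 hab; case: (edge2 e2) => a2' b2' hab'.
have hba := xx_adj b2 a2' adj.
have naa : (pos a : nat) <> pos a'.
  move=> eq; apply: ne; apply: (share (x := a)) => //; first by rewrite set21.
  by rewrite (xeq eq); [rewrite set21 | rewrite a2 a2'].
have nbb : (pos b : nat) <> pos b'.
  move=> eq; apply: ne; apply: (share (x := b)) => //; first by rewrite set22.
  by rewrite (xeq eq); [rewrite set22 | rewrite b2 b2'].
split => h; lia.
Qed.


Lemma nbx_of_adj (u w : W) : WP_adj u w -> w.2 = false -> nbx u (pos w).
Proof.
rewrite /nbx => -[[u2 [w2 h]]|[h1 h2]] w2'.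
  have hh : (pos u).+1 = pos w \/ (pos w).+1 = pos u := h.
  by rewrite u2 /=; case: hh => <-; rewrite eqxx ?orbT.
have u2 : u.2 = true by case: (u.2) h2; rewrite w2'.
have e : pos u = pos w by rewrite /pos h1.
by rewrite u2 e eqxx.
Qed.

Lemma lend_intro (a b : W) j : [set a; b] \in N -> pos a = j  -> pos b = j.+1  ->
  a.2 = false -> b.2 = false -> lend j.
Proof.
move=> e h1 h2 a2 b2; apply/existsP; exists a; apply/existsP; exists b.
by rewrite h1 h2 a2 b2 !eqxx e.
Qed.

Lemma walk (u v : W) : even_connected (@WP_adj n) N u v ->
  exists l t, [/\ 0 < t, runs l t &
    (nbx u l && nbx v (l + 2 * t - 1)) || (nbx u (l + 2 * t - 1) && nbx v l)].
Proof.
case=> r [p [[r1 p0 pr adj] [edges dist]]].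
set c : nat := pos (p 1).
set up := (pos (p 2) == c + 1 ).
have inv : forall k, k < r -> [/\ (p (2 * k + 1)).2 = false, (p (2 * k + 2)).2 = false &
   (if up then pos (p (2 * k + 1)) = c + 2 * k  /\ pos (p (2 * k + 2)) = c + 2 * k + 1 
    else pos (p (2 * k + 1)) + 2 * k = c  /\ pos (p (2 * k + 2)) + 2 * k + 1 = c )].
  elim=> [|k IH] kr.
    case: (edge2 (edges 0 kr)); rewrite !muln0 !add0n => f1 f2 h.
    rewrite ?muln0 ?addn0 ?add0n; split => //.
    rewrite /up /c /=; case: eqP => /= e; [split; lia | ].
    have {}e : ~ (pos (p 2) = pos (p 1) + 1 ) := e. split; lia.
  have [f1 f2 h] := IH (ltnW kr).
  have e1 := edges k (ltnW kr); have e2 := edges k.+1 kr.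
  have ne : [set p (2 * k + 1); p (2 * k + 2)] <> [set p (2 * k.+1 + 1); p (2 * k.+1 + 2)].
    by move=> e; have := dist k k.+1 (ltnW kr) kr e; lia.
  have ad : WP_adj (p (2 * k + 2)) (p (2 * k.+1 + 1)).
    have -> : 2 * k.+1 + 1 = (2 * k + 2).+1 by lia.
    by apply: adj; lia.
  have [st1 st2] := step e1 e2 ne ad.
  case: (edge2 e2) => g1 g2 _; split => //.
  move: h; case: (up) => -[h1 h2].
    have := st1 ltac:(lia); lia.
  have := st2 ltac:(lia); lia.
have adj0 : WP_adj u (p 1) by rewrite -p0; apply: adj; lia.
have adjr : WP_adj v (p (2 * r)).
  apply: WP_adj_sym; rewrite -pr; have -> : 2 * r + 1 = (2 * r).+1 by lia.
  by apply: adj; lia.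
have [f1 _ _] := inv 0 r1.
have [_ fr hr] := inv r.-1 ltac:(lia).
have e2r : 2 * r.-1 + 2 = 2 * r by lia.
rewrite e2r in fr hr.
have nu := nbx_of_adj adj0 f1.
have nv := nbx_of_adj adjr fr.
case U : up in hr.
  exists c, r; split => //; last first.
    have -> : c + 2 * r - 1 = pos (p (2 * r)) by case: hr => _ ->; lia.
    by rewrite nu nv.
  move=> i ir; have [g1 g2] := inv i ir; rewrite U => -[h1 h2].
  by apply: (lend_intro (edges i ir)) => //; lia.
exists (pos (p (2 * r))), r; split => //; last first.
  have -> : pos (p (2 * r)) + 2 * r - 1 = c by case: hr => _; lia.
  by rewrite nu nv orbT.
move=> i ir; have [g1 g2] := inv (r - 1 - i) ltac:(lia); rewrite U => -[h1 h2].
have e := edges (r - 1 - i) ltac:(lia); rewrite setUC in e.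
apply: (lend_intro e) => //; lia.
Qed.


Definition unm (j : nat) : bool := ~~ lend j && ~~ ((0 < j) && lend j.-1).

Definition WalkRes (u w : W) : Prop := exists l t, [/\ 0 < t, runs l t &
    (nbx u l && nbx w (l + 2 * t - 1)) || (nbx u (l + 2 * t - 1) && nbx w l)].

Lemma lend_lt j : lend j -> j.+1 < n.
Proof.
case/existsP => a /existsP [b /and5P[_ /eqP hb _ _ _]].
by rewrite -hb /pos ltn_ord.
Qed.

Lemma lend_supp j (w : W) : lend j -> w.2 = false -> (pos w = j \/ pos w = j.+1) ->
  w \in suppN N.
Proof.
case/existsP => a /existsP [b /and5P[/eqP ha /eqP hb a2 b2 e]] w2 hw.
apply/bigcupP; exists [set a; b] => //.
case: hw => hw.
  by rewrite (@xeq w a) ?set21 //; [lia | rewrite w2 (negbTE a2)].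
by rewrite (@xeq w b) ?set22 //; [lia | rewrite w2 (negbTE b2)].
Qed.

Lemma supp_x (w : W) : w \in suppN N -> w.2 = false /\ ~~ unm (pos w).
Proof.
case/bigcupP => e eN we.
have [a [b [_ ee]]] := HM.1 e eN.
rewrite ee in eN we; case: (edge2 eN) => a2 b2 h.
rewrite /unm negb_and !negbK.
move: we; rewrite !inE => /orP[] /eqP ->; split => //.
- case: h => h; [apply/orP; left; exact: (lend_intro eN)|].
  apply/orP; right; apply/andP; split; first lia.
  by rewrite setUC in eN; apply: (lend_intro eN) => //; lia.
- case: h => h; [|apply/orP; left; rewrite setUC in eN; exact: (lend_intro eN)].
  apply/orP; right; apply/andP; split; first lia.
  by apply: (lend_intro eN) => //; lia.
Qed.

Lemma x_supp (w : W) : w.2 = false -> ~~ unm (pos w) -> w \in suppN N.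
Proof.
move=> w2; rewrite /unm negb_and !negbK => /orP[l|/andP[p0 l]].
  by apply: (lend_supp l) => //; left.
by apply: (lend_supp l) => //; right; lia.
Qed.

Lemma no_consec j : lend j -> lend j.+1 -> False.
Proof.
case/existsP => a /existsP [b /and5P[/eqP ha /eqP hb a2 b2 e]].
case/existsP => a' /existsP [b' /and5P[/eqP ha' /eqP hb' a2' b2' e']].
have ba : b = a'.
  apply: xeq; first lia.
  by apply/eqP; rewrite (negbTE b2) (negbTE a2').
have ee : [set a; b] = [set a'; b'] by apply: (share (x := b)) => //; rewrite ?set22 // ba set21.
have : a \in [set a'; b'] by rewrite -ee set21.
by rewrite !inE => /orP[] /eqP eq; move: ha; rewrite eq; lia.
Qed.

Lemma adj_of_nbx (u w : W) : nbx u (pos w) -> w.2 = false -> WP_adj u w.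
Proof.
rewrite /nbx => /orP[/andP[u2 /eqP e]|/andP[u2 h]] w2.
  right; split; first by apply: val_inj.
  by rewrite u2 w2.
left; have hh : (pos u).+1 = pos w \/ (pos w).+1 = pos u.
  by case/orP: h => /eqP; [left|right].
by split; [apply/negbTE|split].
Qed.

Lemma build l t (u v : W) : 0 < t -> runs l t -> nbx u l -> nbx v (l + 2 * t - 1) ->
  u <> v -> even_connected (@WP_adj n) N u v.
Proof.
move=> t0 rl nu nv uv.
have lt : l + 2 * t - 1 < n by have := lend_lt (rl t.-1 ltac:(lia)); lia.
pose xof (j : nat) : W := (insubd u.1 j, false).
have px : forall j, j < n -> pos (xof j) = j.
  by move=> j jn; rewrite /pos /= val_insubd jn.
pose p (j : nat) : W := if j == 0 then u else if j == 2 * t + 1 then v else xof (l + j - 1).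
have pxx : forall k, k < t -> [set p (2 * k + 1); p (2 * k + 2)] = [set xof (l + 2 * k); xof (l + 2 * k + 1)].
  move=> k kt; rewrite /p.
  have -> : (2 * k + 1 == 0) = false by lia.
  have -> : (2 * k + 2 == 0) = false by lia.
  have -> : (2 * k + 1 == 2 * t + 1) = false by lia.
  have -> : (2 * k + 2 == 2 * t + 1) = false by lia.
  by congr [set xof _; xof _]; lia.
exists t, p; split; split => //.
- have e0 : (2 * t + 1 == 0) = false by lia.
  by rewrite /p e0 eqxx.
- move=> i it; rewrite /p.
  case: (eqVneq i 0) => [->|i0].
    rewrite /= (_ : (1 == 2 * t + 1) = false); last by lia.
    apply: adj_of_nbx => //; rewrite px; last by lia.
    by rewrite (_ : l + 1 - 1 = l) //; lia.
  rewrite (_ : (i.+1 == 0) = false) //.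
  case: (eqVneq i (2 * t)) => [->|it'].
    rewrite (_ : (2 * t == 2 * t + 1) = false); last by lia.
    rewrite addn1 eqxx; apply: WP_adj_sym; apply: adj_of_nbx => //.
    by rewrite px.
  rewrite (_ : (i == 2 * t + 1) = false); last by lia.
  rewrite (_ : (i.+1 == 2 * t + 1) = false); last by lia.
  left; split => //; split => //; left.
  have := px (l + i - 1) ltac:(lia); have := px (l + i.+1 - 1) ltac:(lia).
  rewrite /pos => -> ->; lia.
- move=> k kt; rewrite pxx //.
  case/existsP: (rl k kt) => a /existsP [b /and5P[/eqP ha /eqP hb a2 b2 e]].
  have -> : xof (l + 2 * k) = a by apply: xeq; [rewrite px; lia | rewrite (negbTE a2)].
  have -> : xof (l + 2 * k + 1) = b by apply: xeq; [rewrite px; lia | rewrite (negbTE b2)].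
  done.
- move=> k k' kt kt'; rewrite !pxx // => e.
  have : xof (l + 2 * k) \in [set xof (l + 2 * k'); xof (l + 2 * k' + 1)] by rewrite -e set21.
  rewrite !inE => /orP[] /eqP /(congr1 pos); rewrite !px; lia.
Qed.


Definition AdjW (u w : W) : Prop := WP_adj u w \/ even_connected (@WP_adj n) N u w.

Lemma adj_cases (u w : W) : AdjW u w \/ AdjW w u -> WP_adj u w \/ WalkRes u w.
Proof.
case=> [[h|/walk h]|[h|/walk h]]; [by left| by right | by left; apply: WP_adj_sym |].
right; case: h => l [t [t0 rl h]]; exists l, t; split => //.
by rewrite orbC andbC [X in _ || X]andbC.
Qed.

Lemma natE (m k : nat) : m == k -> m = k.
Proof. by move/eqP. Qed.

Lemma nbx_y (u : W) p : u.2 = true -> nbx u p = (pos u == p).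
Proof. by move=> u2; rewrite /nbx u2 /= orbF. Qed.

Lemma nbx_x (u : W) p : u.2 = false -> nbx u p = ((pos u).+1 == p) || (p.+1 == pos u).
Proof. by move=> u2; rewrite /nbx u2. Qed.

Lemma x_lend (w : W) j : w \notin suppN N -> w.2 = false -> lend j -> pos w = j \/ pos w = j.+1 -> False.
Proof. by move=> ws w2 l h; move: ws; rewrite (lend_supp l w2 h). Qed.

Lemma WP_y (u w : W) : u.2 = true -> WP_adj u w -> pos w = pos u /\ w.2 = false.
Proof.
move=> u2 [[u2' _]|[h1 h2]]; first by rewrite u2 in u2'.
split; first by rewrite /pos h1.
by move: h2; rewrite u2; case: (w.2).
Qed.

Lemma F1 (u w : W) : u.2 = true -> unm (pos u) -> w \notin suppN N ->
  WP_adj u w \/ WalkRes u w -> pos w = pos u /\ w.2 = false.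
Proof.
move=> u2 um ws [h|[l [t [t0 rl h]]]]; first exact: WP_y.
exfalso; move: um; rewrite /unm.
case/orP: h => /andP[a _]; rewrite nbx_y // in a; move/natE: a => a.
  by have := rl 0 t0; rewrite muln0 addn0 -a => ->.
have := rl t.-1 ltac:(lia).
rewrite (_ : l + 2 * t.-1 = (pos u).-1); last by lia.
by move=> ->; rewrite (_ : 0 < pos u); [rewrite andbT /= andbF | lia].
Qed.

Lemma F2 (u w : W) : u.2 = true -> 0 < pos u -> lend (pos u).-1 -> w \notin suppN N ->
  WP_adj u w \/ WalkRes u w -> pos w < pos u.
Proof.
move=> u2 p0 lu ws [h|[l [t [t0 rl h]]]].
  case: (WP_y u2 h) => e w2; exfalso; apply: (x_lend ws w2 lu); right; lia.
case/orP: h => /andP[a b]; rewrite nbx_y // in a; move/natE: a => a.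
  have := rl 0 t0; rewrite muln0 addn0 -a => l0.
  by exfalso; apply: (@no_consec (pos u).-1); rewrite // (_ : (pos u).-1.+1 = pos u) //; lia.
case: (boolP (w.2)) => w2.
  by rewrite nbx_y // in b; move/natE: b; lia.
move/negbTE: w2 => w2; rewrite nbx_x // in b.
case/orP: b => /natE b; first lia.
exfalso; apply: (x_lend ws w2 (rl 0 t0)); right; lia.
Qed.

Lemma F3 (u w : W) j0 t0 s : runs j0 t0 -> ~~ lend (j0 + 2 * t0) -> u.2 = true ->
  pos u = j0 + 2 * s -> s < t0 -> w \notin suppN N ->
  WP_adj u w \/ WalkRes u w ->
  (w.2 = true /\ exists2 s', s <= s' < t0 & pos w = j0 + 2 * s' + 1) \/
  (w.2 = false /\ pos w = j0 + 2 * t0).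
Proof.
move=> r0 nl u2 pu st ws [h|[l [t [t1 rl h]]]].
  case: (WP_y u2 h) => e w2; exfalso; apply: (x_lend ws w2 (r0 s st)); left; lia.
case/orP: h => /andP[a b]; rewrite nbx_y // in a; move/natE: a => a; last first.
  exfalso; apply: (@no_consec (j0 + 2 * s).-1).
    have := rl t.-1 ltac:(lia); rewrite (_ : l + 2 * t.-1 = (j0 + 2 * s).-1) //; lia.
  by rewrite (_ : (j0 + 2 * s).-1.+1 = j0 + 2 * s); [apply: r0 | lia].
have tle : t <= t0 - s.
  rewrite leqNgt; apply/negP => lt; move: nl.
  have e : l + 2 * (t0 - s) = j0 + 2 * t0 by lia.
  by have := rl (t0 - s) lt; rewrite e => ->.
case: (boolP (w.2)) => w2.
  rewrite nbx_y // in b; move/natE: b => b; left; split => //.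
  by exists (s + t.-1); lia.
move/negbTE: w2 => w2; rewrite nbx_x // in b.
case/orP: b => /natE b.
  exfalso; apply: (x_lend ws w2 (rl t.-1 ltac:(lia))); left; lia.
right; split => //.
case: (ltngtP t (t0 - s)) => tt; last lia; last lia.
exfalso; apply: (x_lend ws w2 (r0 (s + t) ltac:(lia))); left; lia.
Qed.


Lemma run_exists j : exists t, runs j t /\ ~~ lend (j + 2 * t).
Proof.
have : forall m j, n - j <= m -> exists t, runs j t /\ ~~ lend (j + 2 * t).
  elim=> [|m IH] {}j hm.
    exists 0; split => [i //|]; rewrite muln0 addn0; apply/negP => /lend_lt; lia.
  case: (boolP (lend j)) => lj; last by exists 0; split => [i //|]; rewrite muln0 addn0.
  have := lend_lt lj => jn.
  have [t [rt nt]] := IH j.+2 ltac:(lia).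
  exists t.+1; split; last by rewrite (_ : j + 2 * t.+1 = j.+2 + 2 * t) //; lia.
  case=> [|i] it; first by rewrite muln0 addn0.
  by have := rt i ltac:(lia); rewrite (_ : j.+2 + 2 * i = j + 2 * i.+1) //; lia.
by move=> h; apply: (h (n - j)).
Qed.

Definition U (k : nat) : nat := \sum_(k <= j < n) ~~ lend j.

Lemma U_rec k : k < n -> U k = ~~ lend k + U k.+1.
Proof. by move=> kn; rewrite /U big_ltn. Qed.

Lemma U_ge k : n <= k -> U k = 0.
Proof. by move=> kn; rewrite /U big_geq. Qed.

Lemma U_mono k k' : k <= k' -> U k' <= U k.
Proof.
move=> le; rewrite -(subnKC le); elim: (k' - k) => [|d IH]; first by rewrite addn0.
case: (ltnP (k + d) n) => kn.
  by rewrite addnS; apply: leq_trans IH; rewrite (U_rec kn) leq_addl.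
by rewrite U_ge //; lia.
Qed.

Lemma U_run j t : runs j t -> U j = t + U (j + 2 * t).
Proof.
elim: t => [|t IH] rt; first by rewrite muln0 addn0.
have r' : runs j t by move=> i it; apply: rt; lia.
have l := rt t (ltnSn t).
have ln := lend_lt l.
rewrite IH // (U_rec (k := j + 2 * t)) ?l /=; last lia.
rewrite (U_rec (k := (j + 2 * t).+1)) //.
have -> : lend (j + 2 * t).+1 = false by apply/negbTE/negP => h; exact: (no_consec l h).
by rewrite (_ : (j + 2 * t).+2 = j + 2 * t.+1) //; lia.
Qed.

Lemma U_end e : ~~ lend e -> U e = (e < n) + U e.+1.
Proof.
move=> le; case: (ltnP e n) => en; first by rewrite U_rec // le.
by rewrite !U_ge //; lia.
Qed.

Lemma U_pos e : 0 < U e -> e < n.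
Proof. by case: (ltnP e n) => // en; rewrite U_ge. Qed.

Lemma bound_arith k e : 1 + U e <= U k -> ~~ lend e ->
  ((U e.+1).+1)./2.+1 <= ((U k).+1)./2.
Proof.
move=> h le; have := U_end le; case: (ltnP e n) => en /= ue.
  by rewrite ue in h; lia.
have : U e.+1 = 0 by rewrite U_ge //; lia.
move=> z; rewrite z; lia.
Qed.


Local Notation V' := (GN_vertex N).
Local Notation E' := (@GN_adj (WP_vertex n) (@WP_adj n) N).

Definition ps (x : V') : nat := pos (val x).
Definition fl (x : V') : bool := (val x).2.

Lemma vns (x : V') : val x \notin suppN N.
Proof. exact: valP x. Qed.

Lemma Eb_irr (x : V') : ~~ Eb E' x x.
Proof. by apply/negP => /asboolP [h _]. Qed.

Lemma adjV (x y : V') : Eb E' x y || Eb E' y x ->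
  WP_adj (val x) (val y) \/ WalkRes (val x) (val y).
Proof.
move=> h; apply: adj_cases.
by case/orP: h => /asboolP [_ h]; [left|right].
Qed.

Lemma Eb_build (x y : V') : val x <> val y -> AdjW (val x) (val y) -> Eb E' x y.
Proof. by move=> ne a; apply/asboolP; split. Qed.

Lemma veq (x y : V') : ps x = ps y -> fl x = fl y -> x = y.
Proof. by move=> h1 h2; apply: val_inj; apply: xeq. Qed.

Lemma Eb_walk (x y : V') l t : 0 < t -> runs l t -> nbx (val x) l ->
  nbx (val y) (l + 2 * t - 1) -> val x <> val y -> Eb E' x y || Eb E' y x.
Proof.
move=> t0 rl nx ny ne; apply/orP; left; apply: Eb_build => //; right.
exact: (build t0 rl nx ny).
Qed.

Lemma iso_of (s : {set V'}) (t : V') :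
  (forall w, w \in s -> Eb E' t w || Eb E' w t -> False) -> isolated E' s t.
Proof.
move=> h w ws; apply/andP; split; apply/negP => e; apply: (h w ws); rewrite e ?orbT //.
Qed.


Lemma inD (s : {set V'}) v w : w \in s :\: (v |: Nb E' s v) ->
  [/\ w \in s, w != v & ~~ (Eb E' v w || Eb E' w v)].
Proof.
rewrite !inE negb_or => /andP[/andP[wv wN] ws]; split => //.
by move: wN; rewrite ws.
Qed.

Variable K : fieldType.

Definition P (k : nat) : Prop := forall s : {set V'},
  (forall w, w \in s -> k <= ps w) -> ok K E' s ((U k).+1./2).

Lemma ps_lt (x : V') : ps x < n.
Proof. exact: ltn_ord. Qed.

Lemma P_ge k : n <= k -> P k.
Proof.
move=> kn s hs.
have -> : s = set0.
  apply/setP => w; rewrite inE; apply/negP => ws; have := hs w ws; have := ps_lt w; lia.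
exact: ok_empty.
Qed.

Lemma cleanup j0 t0 (s' : {set V'}) : P (j0 + 2 * t0).+1 -> runs j0 t0 ->
  ~~ lend (j0 + 2 * t0) -> ~~ ((0 < j0 + 2 * t0) && lend (j0 + 2 * t0).-1) ->
  (forall w, w \in s' -> j0 <= ps w) ->
  (forall w, w \in s' -> fl w -> forall s0, s0 < t0 -> ps w <> j0 + 2 * s0 + 1) ->
  (forall w, w \in s' -> fl w = false -> ps w <> j0 + 2 * t0) ->
  ok K E' s' ((U (j0 + 2 * t0).+1).+1./2).
Proof.
move=> IH rl nl nr hj hy hx; set e := j0 + 2 * t0.
case: (boolP [exists w in s', ps w <= e]) => [/existsP [w /andP[ws we]] | none]; last first.
  apply: IH => w ws; rewrite ltnNge; apply/negP => we; case/negP: none.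
  by apply/existsP; exists w; rewrite ws we.
apply: (ok_iso _ ws); apply: iso_of => w' w's adj.
have hw := adjV adj.
have vw := vns w; have vw' := vns w'.
case: (ltnP (ps w) e) => [lt|ge].
  have jw := hj w ws.
  set s0 := (ps w - j0) %/ 2.
  have s0t : s0 < t0 by rewrite /s0; lia.
  case: (boolP (odd (ps w - j0))) => od.
    have pw : ps w = j0 + 2 * s0 + 1.
      by rewrite /s0; have := modn2 (ps w - j0); rewrite od /=; lia.
    case: (boolP (fl w)) => f.
      by apply: (hy w ws f s0 s0t pw).
    by move/negbTE: f => f; apply: (x_lend vw f (rl s0 s0t)); right; rewrite /ps in pw; lia.
  have pw : ps w = j0 + 2 * s0.
    by rewrite /s0; have := modn2 (ps w - j0); rewrite (negbTE od) /=; lia.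
  case: (boolP (fl w)) => f; last first.
    by move/negbTE: f => f; apply: (x_lend vw f (rl s0 s0t)); left.
  case: (F3 rl nl f pw s0t vw' hw) => [[f' [s1 hs1 p1]]|[f' p1]].
    by case/andP: hs1 => _ hs1; apply: (hy w' w's f' s1 hs1 p1).
  by apply: (hx w' w's f' p1).
have pe : ps w = e by lia.
case: (boolP (fl w)) => f; last by move/negbTE: f => f; apply: (hx w ws f pe).
have um : unm (pos (val w)) by rewrite /unm; rewrite /ps in pe; rewrite pe nl.
have [p1 f1] := F1 f um vw' hw.
by apply: (hx w' w's f1); rewrite /ps p1.
Qed.


Lemma nrend_run j0 t0 : runs j0 t0 -> 0 < t0 -> ~~ ((0 < j0 + 2 * t0) && lend (j0 + 2 * t0).-1).
Proof.
move=> rl t0p; apply/negP => /andP[_ l'].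
apply: (@no_consec (j0 + 2 * t0.-1)); first by apply: rl; lia.
by rewrite (_ : (j0 + 2 * t0.-1).+1 = (j0 + 2 * t0).-1) //; lia.
Qed.

Lemma main : forall m k, n - k <= m -> P k.
Proof.
elim=> [|m IHm] k hk; first by apply: P_ge; lia.
case: (ltnP k n) => kn; last exact: P_ge.
have IH : forall k', k < k' -> P k' by move=> k' lt; apply: IHm; lia.
move=> s hs.
case: (boolP [exists w in s, ps w == k]) => [/existsP [w0 /andP[w0s /eqP w0k]] | none]; last first.
  apply: (ok_mono (IH k.+1 (ltnSn k) s _)); last by have := U_mono (leqnSn k); lia.
  move=> w ws; have := hs w ws; rewrite leq_eqVlt => /orP[/eqP e|//].
  by case/negP: none; apply/existsP; exists w; rewrite ws -e eqxx.
have vw0 := vns w0.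
case: (boolP (lend k)) => lk.
  have f0 : fl w0.
    apply/negPn/negP => /negbTE f; apply: (x_lend vw0 f lk); left; exact: w0k.
  have [t0 [rt nt]] := run_exists k.
  have t0p : 0 < t0 by case: t0 rt nt => // _; rewrite muln0 addn0 lk.
  apply: (@ok_split _ _ _ _ w0 _ ((U (k + 2 * t0).+1).+1./2)) => //.
  - exact: Eb_irr.
  - apply: (ok_mono (IH k.+1 (ltnSn k) _ _)); last by rewrite (U_rec kn) lk.
    move=> w; rewrite in_setD1 => /andP[ne ws]; have := hs w ws.
    rewrite leq_eqVlt => /orP[/eqP e|//]; exfalso.
    have f : fl w by apply/negPn/negP => /negbTE f; apply: (x_lend (vns w) f lk); left; rewrite /ps in e; lia.
    by case/eqP: ne; apply: veq; [rewrite w0k -e | rewrite f f0].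
  - apply: (cleanup (IH _ _) rt nt (nrend_run rt t0p)); first lia.
    + by move=> w /inD [ws _ _]; apply: hs.
    + move=> w /inD [ws _ nadj] f s0 s0t pw; case/negP: nadj.
      apply: (@Eb_walk _ _ k s0.+1) => //.
      * by move=> i ii; apply: rt; lia.
      * by rewrite nbx_y // -/(ps w0) w0k.
      * by rewrite nbx_y // -/(ps w) pw; apply/eqP; lia.
      * by move=> e; move: (congr1 pos e); rewrite -/(ps w0) -/(ps w); lia.
    + move=> w /inD [ws _ nadj] f pw; case/negP: nadj.
      apply: (@Eb_walk _ _ k t0) => //.
      * by rewrite nbx_y // -/(ps w0) w0k.
      * by rewrite nbx_x // -/(ps w) pw; apply/orP; right; apply/eqP; lia.
      * by move=> e; move: (congr1 pos e); rewrite -/(ps w0) -/(ps w); lia.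
  - by apply: bound_arith => //; rewrite (U_run rt); lia.
case: (boolP ((0 < k) && lend k.-1)) => rk.
  case/andP: rk => k0 lk1.
  have f0 : fl w0.
    apply/negPn/negP => /negbTE f; apply: (x_lend vw0 f lk1); right; rewrite /ps in w0k; lia.
  apply: (ok_iso _ w0s); apply: iso_of => w ws adj.
  have := F2 f0 ltac:(rewrite -/(ps w0) w0k //) ltac:(rewrite -/(ps w0) w0k //) (vns w) (adjV adj).
  by rewrite -/(ps w) -/(ps w0) w0k; have := hs w ws; lia.
have uk : unm k by rewrite /unm lk rk.
case: (boolP [exists w in s, (ps w == k) && ~~ fl w]) =>
   [/existsP [wx /andP[wxs /andP[/eqP wxk wxf]]] | nox]; last first.
  have f0 : fl w0.
    apply/negPn/negP => f; case/negP: nox; apply/existsP; exists w0; rewrite w0s w0k eqxx //.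
  apply: (ok_iso _ w0s); apply: iso_of => w ws adj.
  have [p1 f1] := F1 f0 ltac:(rewrite -/(ps w0) w0k //) (vns w) (adjV adj).
  case/negP: nox; apply/existsP; exists w; rewrite ws /= {1}/ps p1 -/(ps w0) w0k eqxx /=.
  by rewrite /fl f1.
move/negbTE: wxf => wxf.
have [t0 [rt nt]] := run_exists k.+1.
apply: (@ok_split _ _ _ _ wx _ ((U (k.+1 + 2 * t0).+1).+1./2)) => //.
- exact: Eb_irr.
- case: (boolP [exists w in s :\ wx, ps w == k]) => [/existsP [wy /andP[wys /eqP wyk]] | noy].
    have := wys; rewrite in_setD1 => /andP[ne wys0].
    have fy : fl wy.
      apply/negPn/negP => /negbTE f; case/eqP: ne; apply: veq; first by rewrite wyk wxk.
      by rewrite f.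
    apply: (ok_iso _ wys); apply: iso_of => w; rewrite in_setD1 => /andP[nw ws] adj.
    have [p1 f1] := F1 fy ltac:(rewrite -/(ps wy) wyk //) (vns w) (adjV adj).
    by case/eqP: nw; apply: veq; [rewrite /ps p1 -/(ps wy) wyk | rewrite /fl f1 -/(fl wx) wxf].
  apply: (ok_mono (IH k.+1 (ltnSn k) _ _)); last by have := U_mono (leqnSn k); lia.
  move=> w ws; have := hs w (subsetP (subD1set s wx) w ws).
  rewrite leq_eqVlt => /orP[/eqP e|//].
  by case/negP: noy; apply/existsP; exists w; rewrite ws -e eqxx.
- apply: (cleanup (IH _ _) rt nt _); first lia.
  + case: (posnP t0) => [t00|t0p]; last exact: nrend_run.
    by rewrite t00 muln0 addn0 /= lk.
  + move=> w /inD [ws nw nadj]; have := hs w ws; rewrite leq_eqVlt => /orP[/eqP e|//].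
    exfalso; case: (boolP (fl w)) => f.
      case/negP: nadj; apply/orP; left; apply: Eb_build.
        by move=> ev; move: f; rewrite /fl -ev -/(fl wx) wxf.
      left; right; split.
        by apply: val_inj; change (ps wx = ps w); rewrite wxk.
      by move: f; rewrite /fl => ->; move: wxf; rewrite /fl => ->.
    by case/eqP: nw; apply: veq; [rewrite wxk e | rewrite (negbTE f) wxf].
  + move=> w /inD [ws _ nadj] f s0 s0t pw; case/negP: nadj.
    apply: (@Eb_walk _ _ k.+1 s0.+1) => //.
    * by move=> i ii; apply: rt; lia.
    * by rewrite nbx_x // -/(ps wx) wxk eqxx.
    * by rewrite nbx_y // -/(ps w) pw; apply/eqP; lia.
    * by move=> e; move: (congr1 pos e); rewrite -/(ps wx) -/(ps w); lia.
  + move=> w /inD [ws _ nadj] f pw; case/negP: nadj.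
    case: (posnP t0) => [t00|t0p].
      apply/orP; left; apply: Eb_build.
        by move=> e; move: (congr1 pos e); rewrite -/(ps wx) -/(ps w); lia.
      left; left; split; first exact: wxf.
      split; first exact: f.
      left; change ((ps wx).+1 = ps w).
      by rewrite pw wxk t00 muln0 addn0.
    apply: (@Eb_walk _ _ k.+1 t0) => //.
    * by rewrite nbx_x // -/(ps wx) wxk eqxx.
    * by rewrite nbx_x // -/(ps w) pw; apply/orP; right; apply/eqP; lia.
    * by move=> e; move: (congr1 pos e); rewrite -/(ps wx) -/(ps w); lia.
- apply: bound_arith => //.
  by rewrite (U_rec kn) lk (U_run rt) /= add1n ltnS leq_addl.
Qed.


Lemma U0_card : U 0 + #|[set j : 'I_n | lend j]| = n.
Proof.
have -> : #|[set j : 'I_n | lend j]| = \sum_(j < n) (lend j : nat).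
  rewrite -sum1_card big_mkcond /=; apply: eq_bigr => j _; rewrite inE.
  by case: (lend j).
rewrite /U big_mkord -big_split /=.
rewrite (eq_bigr (fun _ => 1)); last by move=> j _; case: (lend j).
by rewrite sum1_card card_ord.
Qed.

Lemma N_le_L : #|N| <= #|[set j : 'I_n | lend j]|.
Proof.
pose g (j : 'I_n) : {set W} := [set u : W | ~~ u.2 && ((pos u == j) || (pos u == j.+1))].
apply: leq_trans (leq_imset_card g _); apply: subset_leq_card.
apply/subsetP => e eN.
have [a [b [_ ee]]] := HM.1 e eN.
rewrite ee in eN *.
have key : forall a b : W, [set a; b] \in N -> a.2 = false -> b.2 = false ->
    (pos a).+1 = pos b -> [set a; b] \in g @: [set j : 'I_n | lend j].
  move=> a' b' e' a2 b2 ab; apply/imsetP; exists a'.1.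
    by rewrite inE; apply: (lend_intro e').
  apply/setP => u; rewrite !inE.
  apply/idP/idP.
    case/orP => /eqP ->; rewrite ?a2 ?b2 /= -/(pos a') ?eqxx //.
    by rewrite ab eqxx orbT.
  case/andP => u2 /orP[] /natE pu; apply/orP; [left|right]; apply/eqP; apply: xeq.
  - by rewrite pu.
  - by rewrite a2; apply/negbTE.
  - by rewrite pu -ab.
  - by rewrite b2; apply/negbTE.
case: (edge2 eN) => a2 b2 [h|h]; first exact: key.
by rewrite setUC; apply: key => //; rewrite setUC.
Qed.

End Graph.


Unset Implicit Arguments.
Set Strict Implicit.

Theorem lemma3p7 (K : fieldType) (n q : nat) (N : {set {set WP_vertex n}}) :
  (2 <= n)%N -> (2 <= q)%N -> (q <= n %/ 2 + 1)%N ->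
  is_matching (@path_adj n) N -> #|N| = q.-1 ->
  edge_ideal_reg_le K (@GN_adj (WP_vertex n) (@WP_adj n) N)
    (2 + (n - q) %/ 2).
Proof.
move=> n2 q2 qn HM cN.
have hok : forall s, ok K (@GN_adj (WP_vertex n) (@WP_adj n) N) s ((U N 0).+1./2).
  by move=> s; apply: (@main n N HM K (n - 0) 0 (leqnn _)) => w _.
have c1 := U0_card N.
have c2 := N_le_L HM.
have UL : (U N 0).+1./2 <= 1 + (n - q) %/ 2 by lia.
have -> : 2 + (n - q) %/ 2 = (1 + (n - q) %/ 2).+1 by lia.
apply: reg_from_ok => s; exact: ok_mono (hok s) UL.
Qed.
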